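(* Suppose that $\phi\in\mathbb{Q}(x)$ has degree $2$, has a $2$-periodic critical point, and that $\operatorname{Aut}(\phi)$ is trivial. Then $\phi$ is linearly conjugate over $\mathbb{Q}$ to a map of the form $\phi_v=\dfrac{v(x-1)}{x^2}$ with $v\in\mathbb{Q}\setminus\{0\}$.
   Context: A point $P\in\mathbb{P}^1(\overline{\mathbb{Q}})$ is $2$-periodic if $\phi^2(P)=P\neq\phi(P)$; a critical point is a point where $\phi:\mathbb{P}^1\to\mathbb{P}^1$ ramifies. $\operatorname{Aut}(\phi)$ is the group of degree-one $\sigma\in\overline{\mathbb{Q}}(x)$ with $\sigma^{-1}\circ\phi\circ\sigma=\phi$. Linear conjugacy over $\mathbb{Q}$: $\psi=\sigma^{-1}\circ\phi\circ\sigma$ for some degree-one $\sigma\in\mathbb{Q}(x)$. *)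

(* Defs.v *)
(* Qbar is modelled by algC (algebraic numbers), with Q
   embedded via ratr.  Points of P^1(Qbar) are nonzero pairs (x,y) = [x:y],
   compared up to scaling with peq.  A rational map phi = f/g in Q(x) of
   degree <= 2 is encoded by polynomials f g : {poly rat} and acts on P^1 by
   the homogenized quadratic forms F(X,Y) = Y^2 f(X/Y), G(X,Y) = Y^2 g(X/Y). *)
From mathcomp Require Import all_boot all_order all_algebra all_field.
Set Implicit Arguments. Unset Strict Implicit. Unset Printing Implicit Defensive.
Import GRing.Theory Num.Theory.
Local Open Scope ring_scope.

Definition pt := (algC * algC)%type.

Definition nzpt (P : pt) : bool := (P.1 != 0) || (P.2 != 0).

Definition peq (P Q : pt) : bool := P.1 * Q.2 == Q.1 * P.2.

Definition hom2 (f : {poly rat}) (P : pt) : algC :=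
  \sum_(i < 3) ratr f`_i * P.1 ^+ i * P.2 ^+ (2 - i).

Definition happ (f g : {poly rat}) (P : pt) : pt := (hom2 f P, hom2 g P).

Definition is_deg2 (f g : {poly rat}) : bool :=
  coprimep f g && (maxn (size f) (size g) == 3)%N.

Definition period2 (f g : {poly rat}) (P : pt) : Prop :=
  [/\ nzpt P, peq (happ f g (happ f g P)) P & ~~ peq (happ f g P) P].

(* P is a critical point: phi ramifies at P, i.e. with phi(P) = [a:b], the
   fibre form b F - a G vanishes to order >= 2 at P = [p:q], i.e. is
   divisible by (q X - p Y)^2 (it has degree 2). *)
Definition critical (f g : {poly rat}) (P : pt) : Prop :=
  nzpt P /\
  exists c : algC, forall x y : algC,
    (happ f g P).2 * hom2 f (x, y) - (happ f g P).1 * hom2 g (x, y)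
      = c * (P.2 * x - P.1 * y) ^+ 2.

Definition mob (a b c d : algC) (P : pt) : pt :=
  (a * P.1 + b * P.2, c * P.1 + d * P.2).

(* Aut(phi) is trivial: every degree-one sigma in Qbar(x) with
   sigma^-1 o phi o sigma = phi (equivalently phi o sigma = sigma o phi
   on P^1(Qbar)) is the identity. *)
Definition trivial_aut (f g : {poly rat}) : Prop :=
  forall a b c d : algC, a * d - b * c != 0 ->
    (forall P, nzpt P ->
       peq (happ f g (mob a b c d P)) (mob a b c d (happ f g P))) ->
    [/\ b = 0, c = 0 & a = d].

Definition phiv_num (v : rat) : {poly rat} := v *: ('X - 1).
Definition phiv_den : {poly rat} := 'X^2.

(* Main.v *)
Require Import Defs.
From mathcomp Require Import all_boot all_order all_algebra all_field.
From mathcomp Require Import ring.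
Import GRing.Theory Num.Theory.
Local Open Scope ring_scope.
Lemma hom2E (f : {poly rat}) (x y : algC) :
  hom2 f (x, y) = ratr f`_0 * y ^+ 2 + ratr f`_1 * x * y + ratr f`_2 * x ^+ 2.
Proof.
rewrite /hom2 !big_ord_recr big_ord0 /= add0r.
rewrite !expr0 !expr1 !mulr1. ring.
Qed.

Definition sc (k : algC) (P : pt) : pt := (k * P.1, k * P.2).
Definition psi (a0 a1 b2 : algC) (U : pt) : pt :=
  (a0 * U.2 ^+ 2 + a1 * U.1 * U.2, b2 * U.1 ^+ 2).

Lemma happ_sc f g k P : happ f g (sc k P) = sc (k ^+ 2) (happ f g P).
Proof. case: P => x y; rewrite /happ /sc /= !hom2E; congr pair; ring. Qed.

Lemma peq_scl k U V : k != 0 -> peq (sc k U) V = peq U V.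
Proof.
move=> hk; rewrite /peq /= -mulrA [V.1 * _]mulrCA.
by rewrite (inj_eq (mulfI hk)).
Qed.

Lemma peq_scr k U V : k != 0 -> peq U (sc k V) = peq U V.
Proof.
move=> hk; rewrite /peq /= [_ * (k * _)]mulrCA -mulrA.
by rewrite (inj_eq (mulfI hk)).
Qed.

Lemma peq_mob a b c d U V : a * d - b * c != 0 ->
  peq (mob a b c d U) (mob a b c d V) = peq U V.
Proof.
move=> hD; rewrite /peq /mob /= -subr_eq0 -[U.1 * _ == _]subr_eq0.
have -> : (a * U.1 + b * U.2) * (c * V.1 + d * V.2) -
   (a * V.1 + b * V.2) * (c * U.1 + d * U.2) =
   (a * d - b * c) * (U.1 * V.2 - V.1 * U.2) by ring.
by rewrite mulf_eq0 (negbTE hD).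
Qed.

Lemma mob_sc a b c d k U : mob a b c d (sc k U) = sc k (mob a b c d U).
Proof. rewrite /mob /sc /=; congr pair; ring. Qed.

Lemma size3 f g : is_deg2 f g -> (size f <= 3)%N /\ (size g <= 3)%N.
Proof. by case/andP=> _ /eqP h; split; rewrite -h ?leq_maxl ?leq_maxr. Qed.

Lemma hornerE3 (f : {poly rat}) (z : algC) : (size f <= 3)%N ->
  (map_poly ratr f).[z] = ratr f`_0 + ratr f`_1 * z + ratr f`_2 * z ^+ 2.
Proof.
move=> hs; rewrite (horner_coef_wide _ (n:=3)); last by rewrite size_map_poly.
rewrite !big_ord_recr big_ord0 /= add0r !coef_map /= expr0 expr1 mulr1.
by [].
Qed.

Lemma size2 (f : {poly rat}) : (size f <= 3)%N -> f`_2 = 0 -> (size f <= 2)%N.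
Proof.
move=> h3 h2; apply/leq_sizeP => j; rewrite leq_eqVlt; case/orP=> [/eqP <- //|hj].
by apply: nth_default; apply: leq_trans h3 hj.
Qed.

Lemma nocommon f g P : is_deg2 f g -> nzpt P -> nzpt (happ f g P).
Proof.
move=> hd; have [sf sg] := size3 _ _ hd; case/andP: (hd) => hcop _.
case: P => x y; rewrite /nzpt /happ /= => hP.
rewrite -negb_and; apply/negP => /andP [/eqP hf /eqP hg].
have [y0|ny] := eqVneq y 0.
  move: hP; rewrite y0 eqxx orbF => hx.
  move: hf hg; rewrite !hom2E y0 !expr0n /= !mulr0 !add0r => hf hg.
  have hx2 : x ^+ 2 != 0 by rewrite expf_neq0.
  have f2 : f`_2 = 0.
    by apply/eqP; rewrite -(fmorph_eq0 (ratr : rat -> algC)); apply/eqP/(mulIf hx2); rewrite mul0r.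
  have g2 : g`_2 = 0.
    by apply/eqP; rewrite -(fmorph_eq0 (ratr : rat -> algC)); apply/eqP/(mulIf hx2); rewrite mul0r.
  case/andP: hd => _ /eqP h.
  have : (maxn (size f) (size g) <= 2)%N by rewrite geq_max !size2.
  by rewrite h.
have hcop' : coprimep (map_poly ratr f) (map_poly (ratr : rat -> algC) g).
  by rewrite coprimep_map.
have := coprimep_root hcop' (x := x / y).
rewrite /root !hornerE3 //.
have -> : ratr f`_0 + ratr f`_1 * (x / y) + ratr f`_2 * (x / y) ^+ 2 =
   hom2 f (x, y) / y ^+ 2 by rewrite hom2E; field; rewrite ny.
have -> : ratr g`_0 + ratr g`_1 * (x / y) + ratr g`_2 * (x / y) ^+ 2 =
   hom2 g (x, y) / y ^+ 2 by rewrite hom2E; field; rewrite ny.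
by rewrite hf hg mul0r eqxx => /(_ isT).
Qed.

Arguments nocommon {f g P}.

Lemma hom2_Crat f x y : x \in Crat -> y \in Crat -> hom2 f (x, y) \in Crat.
Proof.
move=> hx hy; rewrite hom2E.
move: (Crat_rat f`_0) (Crat_rat f`_1) (Crat_rat f`_2).
move: (ratr f`_0 : algC) (ratr f`_1 : algC) (ratr f`_2 : algC) => a b c ha hb hc.
by rewrite !rpredD ?rpredM ?rpredX.
Qed.

Lemma quad_interp f r p s q X Y :
  hom2 f (r * X + p * Y, s * X + q * Y) =
  hom2 f (r, s) * X ^+ 2 + (hom2 f (r + p, s + q) - hom2 f (r, s) - hom2 f (p, q)) * X * Y
  + hom2 f (p, q) * Y ^+ 2.
Proof. rewrite !hom2E; ring. Qed.

Lemma NF f g p q r s : is_deg2 f g -> critical f g (p, q) -> period2 f g (p, q) ->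
  happ f g (p, q) = (r, s) ->
  r * q - p * s != 0 /\ exists a1 b2, b2 != 0 /\
    (p \in Crat -> q \in Crat -> r \in Crat -> s \in Crat -> (a1 \in Crat) && (b2 \in Crat)) /\
    forall U,
    happ f g (mob r p s q U) =
    sc (r * q - p * s)^-1 (mob r p s q (psi (r * q - p * s) a1 b2 U)).
Proof.
move=> hd [nzP [c hc]] [_ per nfix] hrs.
rewrite hrs /= in hc; rewrite hrs /peq /= in per nfix.
have hD : r * q - p * s != 0 by rewrite subr_eq0.
split=> //.
have hF : hom2 f (p, q) = r by move: hrs; rewrite /happ => -[].
have hG : hom2 g (p, q) = s by move: hrs; rewrite /happ => -[].
have per' : q * hom2 f (r, s) - p * hom2 g (r, s) = 0.
  by rewrite mulrC (eqP per) subrr.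
pose a1 := q * hom2 f (r + p, s + q) - p * hom2 g (r + p, s + q) - (r * q - p * s).
pose b2 := - s * hom2 f (r, s) + r * hom2 g (r, s).
have hb2 : b2 = - c * (r * q - p * s) ^+ 2.
  rewrite /b2; have -> : - s * hom2 f (r, s) + r * hom2 g (r, s) =
    - (s * hom2 f (r, s) - r * hom2 g (r, s)) by ring.
  rewrite hc; ring.
exists a1, b2; split.
  apply/eqP => b20.
  have nzQ : nzpt (r, s) by rewrite -hrs; apply: nocommon.
  have := nocommon hd nzQ; rewrite /nzpt /happ /=.
  have e1 : hom2 f (r, s) * (r * q - p * s) = 0.
    have -> : hom2 f (r, s) * (r * q - p * s) =
       r * (q * hom2 f (r, s) - p * hom2 g (r, s)) + p * b2 by rewrite /b2; ring.
    by rewrite b20 per' mulr0; ring.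
  have e2 : hom2 g (r, s) * (r * q - p * s) = 0.
    have -> : hom2 g (r, s) * (r * q - p * s) =
       s * (q * hom2 f (r, s) - p * hom2 g (r, s)) + q * b2 by rewrite /b2; ring.
    by rewrite b20 per' mulr0; ring.
  move: e1 e2 => /eqP; rewrite mulf_eq0 (negbTE hD) orbF => /eqP ->.
  by move=> /eqP; rewrite mulf_eq0 (negbTE hD) orbF => /eqP ->; rewrite eqxx.
split.
  move=> hp hq hr hs; rewrite /a1 /b2.
  by rewrite !(rpredB, rpredD, rpredN, rpredM, hom2_Crat).
case=> X Y; rewrite /mob /happ /sc /psi /=.
set x := r * X + p * Y; set y := s * X + q * Y.
have hi : s * hom2 f (x, y) - r * hom2 g (x, y) = - b2 * X ^+ 2.
  by rewrite hc hb2 /x /y; ring.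
have hii : q * hom2 f (x, y) - p * hom2 g (x, y) =
    (r * q - p * s) * Y ^+ 2 + a1 * X * Y.
  rewrite /x /y !quad_interp hF hG /a1.
  rewrite -[LHS]subr0 -(mulr0 (X ^+ 2 - X * Y)) -per'; ring.
rewrite -hii.
have -> : b2 * X ^+ 2 = - (s * hom2 f (x, y) - r * hom2 g (x, y)) by rewrite hi; ring.
congr pair; field; exact: hD.
Qed.

Lemma omega_ex : exists w : algC, w ^+ 2 + w + 1 = 0.
Proof.
exists ((-1 + sqrtC (-3)) / 2).
have ht := sqrtCK (-3 : algC).
have h2 : (2 : algC) != 0 by rewrite pnatr_eq0.
have -> : ((-1 + sqrtC (-3 : algC)) / 2) ^+ 2 + (-1 + sqrtC (-3)) / 2 + 1 =
  (sqrtC (-3) ^+ 2 + 3) / 4 by field.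
by rewrite ht addNr mul0r.
Qed.

Lemma a1_nz f g r p s q b2 : r * q - p * s != 0 ->
  (forall U, happ f g (mob r p s q U) =
     sc (r * q - p * s)^-1 (mob r p s q (psi (r * q - p * s) 0 b2 U))) ->
  trivial_aut f g -> False.
Proof.
move=> hD hNF htriv.
have [w hw] := omega_ex.
have hw3 : w ^+ 3 = 1.
  apply/eqP; rewrite -subr_eq0.
  have -> : w ^+ 3 - 1 = (w - 1) * (w ^+ 2 + w + 1) by ring.
  by rewrite hw mulr0.
have hw0 : w != 0 by apply/eqP => w0; move: hw3; rewrite w0 expr0n /= => /eqP; rewrite eq_sym oner_eq0.
have hw1 : w - 1 != 0.
  apply/eqP => w1; have : w = 1 by apply/eqP; rewrite -subr_eq0 w1.
  move=> e; move: hw; rewrite e expr1n => h.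
  have : (3%:R : algC) = 0 by rewrite -h; ring.
  by move/eqP; rewrite pnatr_eq0.
pose a := w * r * q - p * s; pose b := p * r * (1 - w);
pose c := s * q * (w - 1); pose d := q * r - w * p * s.
have hdet : a * d - b * c != 0.
  have -> : a * d - b * c = w * (r * q - p * s) ^+ 2 by rewrite /a /b /c /d; ring.
  by rewrite mulf_neq0 // expf_neq0.
have mobM : forall V, mob a b c d (mob r p s q V) =
    sc (r * q - p * s) (mob r p s q (w * V.1, V.2)).
  by move=> V; rewrite /mob /sc /a /b /c /d /=; congr pair; ring.
have hcomm : forall P, nzpt P ->
    peq (happ f g (mob a b c d P)) (mob a b c d (happ f g P)).
  move=> P _.
  pose W := sc (r * q - p * s)^-1 (mob q (- p) (- s) r P).
  have eP : P = mob r p s q W.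
    by case: P @W => x y W; rewrite /W /mob /sc /=; congr pair; field.
  rewrite eP mobM happ_sc !hNF mob_sc mobM.
  rewrite peq_scl ?expf_neq0 // peq_scl ?invr_neq0 // peq_scr ?invr_neq0 //.
  rewrite peq_scr // peq_mob //.
  rewrite /peq /psi /=; apply/eqP.
  rewrite -[LHS]mulr1 -hw3; ring.
have [hb hc had] := htriv a b c d hdet hcomm.
move: hb hc had; rewrite /a /b /c /d => hb hc had.
have pr0 : p * r = 0.
  by apply/eqP; move: hb => /eqP; rewrite mulf_eq0 -opprB oppr_eq0 (negbTE hw1) orbF.
have sq0 : s * q = 0.
  by apply/eqP; move: hc => /eqP; rewrite mulf_eq0 (negbTE hw1) orbF.
have e3 : (w - 1) * (r * q + p * s) = 0.
  by rewrite -[RHS](subrr (q * r - w * p * s)) -{1}had; ring.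
move: e3 => /eqP; rewrite mulf_eq0 (negbTE hw1) /= => /eqP e3.
have : (r * q - p * s) ^+ 2 = 0.
  have -> : (r * q - p * s) ^+ 2 = (r * q + p * s) ^+ 2 - 4 * (p * r) * (s * q) by ring.
  rewrite e3 pr0 sq0; ring.
by move/eqP; rewrite expf_eq0 /= (negbTE hD).
Qed.

Lemma lincomb (K : algC) {L R A B : algC} : L = R -> A - K * (L - R) = B -> A = B.
Proof. by move=> ->; rewrite subrr mulr0 subr0. Qed.

Lemma two_crit f g r p s q a1 b2 P : r * q - p * s != 0 -> a1 != 0 -> b2 != 0 ->
  (forall U, happ f g (mob r p s q U) =
     sc (r * q - p * s)^-1 (mob r p s q (psi (r * q - p * s) a1 b2 U))) ->
  critical f g P -> period2 f g P -> ~~ peq P (p, q) -> False.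
Proof.
move=> hD ha1 hb2 hNF.
have [W ->] : exists W, P = mob r p s q W.
  exists (sc (r * q - p * s)^-1 (mob q (- p) (- s) r P)).
  by case: P => x y; rewrite /mob /sc /=; congr pair; field.
move=> [_ [c hc]] [_ per nfix] hne.
have e0 : (p, q) = mob r p s q (0, 1) by rewrite /mob /=; congr pair; ring.
rewrite e0 peq_mob // /peq /= mulr1 mul0r in hne.
rewrite !hNF happ_sc hNF peq_scl ?expf_neq0 ?invr_neq0 // peq_scl ?invr_neq0 //
  peq_mob // in per.
rewrite hNF peq_scl ?invr_neq0 // peq_mob // in nfix.
case: W hne hc per nfix => W1 W2 /= hW1 hc per nfix.
have clean : forall Z1 Z2,
  b2 * W1 ^+ 2 * ((r * q - p * s) * Z2 ^+ 2 + a1 * Z1 * Z2)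
  - ((r * q - p * s) * W2 ^+ 2 + a1 * W1 * W2) * (b2 * Z1 ^+ 2)
  = c * (r * q - p * s) ^+ 3 * (W2 * Z1 - W1 * Z2) ^+ 2.
  move=> Z1 Z2.
  have h := hc (mob r p s q (Z1, Z2)).1 (mob r p s q (Z1, Z2)).2.
  have h' : (happ f g (mob r p s q (W1, W2))).2 * (happ f g (mob r p s q (Z1, Z2))).1
     - (happ f g (mob r p s q (W1, W2))).1 * (happ f g (mob r p s q (Z1, Z2))).2
     = c * ((mob r p s q (W1, W2)).2 * (mob r p s q (Z1, Z2)).1
            - (mob r p s q (W1, W2)).1 * (mob r p s q (Z1, Z2)).2) ^+ 2 by exact: h.
  rewrite !hNF /sc /mob /psi /= in h'.
  by apply: (lincomb (r * q - p * s) h'); field.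
have e01 := clean 0 1; have e10 := clean 1 0; have e11 := clean 1 1.
have hW1' : W1 ^+ 2 != 0 by rewrite expf_neq0.
have ek : c * (r * q - p * s) ^+ 3 = b2 * (r * q - p * s).
  by apply: (mulIf hW1'); apply: (lincomb (-1) e01); ring.
have key0 : b2 * W1 * (a1 * W1 + 2 * (r * q - p * s) * W2) = 0.
  apply: (lincomb 1 e11); apply: (lincomb (-1) e01); apply: (lincomb (-1) e10).
  by apply: (lincomb (-2 * W1 * W2) ek); ring.
move: key0 => /eqP; rewrite !mulf_eq0 (negbTE hb2) (negbTE hW1) /= => /eqP key.
have h2 : (2 : algC) != 0 by rewrite pnatr_eq0.
have eW2 : W2 = - (a1 * W1) / (2 * (r * q - p * s)).
  by apply: (lincomb ((2 * (r * q - p * s))^-1) key); field.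
subst W2.
move: per nfix; rewrite /peq /psi /= => /eqP per nfix.
have E : a1 ^+ 3 - 8 * (r * q - p * s) ^+ 2 * b2 = 0.
  have hK : W1 ^+ 5 * b2 * a1 / (16 * (r * q - p * s) ^+ 2) != 0.
    have h16 : (16 : algC) != 0 by rewrite pnatr_eq0.
    by rewrite !mulf_neq0 ?invr_neq0 ?expf_neq0 ?mulf_neq0 ?expf_neq0.
  apply: (mulfI hK); rewrite mulr0.
  by apply: (lincomb 1 per); field.
move/negP: nfix; apply; apply/eqP.
by apply: (lincomb (W1 ^+ 3 / (8 * (r * q - p * s) ^+ 2)) E); field.
Qed.

Lemma root_mod (w R : {poly rat}) (z : algC) : (size w <= 3)%N -> w != 0 ->
  z \notin Crat -> (map_poly ratr w).[z] = 0 ->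
  ((map_poly ratr R).[z] == 0) = ((R %% w)`_0 == 0) && ((R %% w)`_1 == 0).
Proof.
move=> hs hw hz hwz.
rewrite {1}(divp_eq R w) rmorphD rmorphM /= hornerD hornerM hwz mulr0 add0r.
have sT : (size (R %% w)%R <= 2)%N.
  by rewrite -ltnS; apply: leq_trans hs; rewrite ltn_modp.
have sT3 : (size (R %% w)%R <= 3)%N by apply: leq_trans sT _.
rewrite hornerE3 // [(R %% w)`_2]nth_default // rmorph0 mul0r addr0.
apply/eqP/andP => [h|[/eqP -> /eqP ->]]; last by rewrite !rmorph0 mul0r addr0.
have T1 : (R %% w)`_1 = 0.
  apply/eqP; apply/negPn/negP => h1.
  move/negP: hz; apply.
  have -> : z = ratr (- (R %% w)`_0 / (R %% w)`_1).
    rewrite fmorph_div rmorphN /=.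
    have h1' : (ratr (R %% w)`_1 : algC) != 0 by rewrite fmorph_eq0.
    by apply: (lincomb ((ratr (R %% w)`_1)^-1) h); field.
  exact: Crat_rat.
split; apply/eqP => //.
by move: h; rewrite T1 rmorph0 mul0r addr0 => /eqP; rewrite fmorph_eq0 => /eqP.
Qed.

Lemma conj_root (w : {poly rat}) (x : algC) : (size w <= 3)%N -> w != 0 ->
  x \notin Crat -> (map_poly ratr w).[x] = 0 ->
  exists x', [/\ x' \notin Crat, x' != x & forall R : {poly rat},
    ((map_poly ratr R).[x] == 0) = ((map_poly ratr R).[x'] == 0)].
Proof.
move=> hs hw hx hwx.
have w2 : w`_2 != 0.
  apply/negP => /eqP w2; have s2 := size2 _ hs w2.
  move: hwx; rewrite hornerE3 // w2 rmorph0 mul0r addr0 => h.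
  have [w1|w1] := eqVneq w`_1 0.
    move: h; rewrite w1 rmorph0 mul0r addr0 => /eqP; rewrite fmorph_eq0 => /eqP w0.
    move/negP: hw; apply; apply/eqP/polyP => i; rewrite coef0.
    case: i => [|[|i]] //; apply: nth_default; exact: leq_trans s2 _.
  move/negP: hx; apply.
  have -> : x = ratr (- w`_0 / w`_1).
    rewrite fmorph_div rmorphN /=.
    have h1' : (ratr w`_1 : algC) != 0 by rewrite fmorph_eq0.
    by apply: (lincomb ((ratr w`_1)^-1) h); field.
  exact: Crat_rat.
have w2' : (ratr w`_2 : algC) != 0 by rewrite fmorph_eq0.
pose x' := - (ratr w`_1 / ratr w`_2) - x.
have hwx' : (map_poly ratr w).[x'] = 0.
  rewrite hornerE3 //; move: hwx; rewrite hornerE3 // => h.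
  by apply: (lincomb 1 h); rewrite /x'; field.
have hx' : x' \notin Crat.
  apply/negP => h; move/negP: hx; apply.
  have -> : x = ratr (- (w`_1 / w`_2)) - x' by rewrite /x' rmorphN fmorph_div /=; ring.
  by rewrite rpredB ?Crat_rat.
exists x'; split => //.
  apply/negP => /eqP e; move/negP: hx; apply.
  have -> : x = ratr (- (w`_1 / w`_2) / 2).
    rewrite fmorph_div rmorphN fmorph_div rmorph_nat /=.
    have h2 : (2 : algC) != 0 by rewrite pnatr_eq0.
    by apply: (lincomb (- 2^-1) e); rewrite /x'; field.
  exact: Crat_rat.
by move=> R; rewrite (root_mod w R x hs hw hx hwx) (root_mod w R x' hs hw hx' hwx').
Qed.



Definition Wpoly (f g : {poly rat}) : {poly rat} :=
  Poly [:: f`_1 * g`_0 - f`_0 * g`_1; 2 * (f`_2 * g`_0 - f`_0 * g`_2);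
           f`_2 * g`_1 - f`_1 * g`_2].
Definition Epoly (f g : {poly rat}) : {poly rat} := f - 'X * g.
Definition R2poly (f g : {poly rat}) : {poly rat} :=
  (f`_0)%:P * g ^+ 2 + (f`_1)%:P * (f * g) + (f`_2)%:P * f ^+ 2
  - 'X * ((g`_0)%:P * g ^+ 2 + (g`_1)%:P * (f * g) + (g`_2)%:P * f ^+ 2).

Lemma evalF (f : {poly rat}) (t : algC) : (size f <= 3)%N ->
  (map_poly ratr f).[t] = hom2 f (t, 1).
Proof. by move=> hs; rewrite hornerE3 // hom2E; ring. Qed.

Lemma evalW f g (t : algC) :
  (map_poly ratr (Wpoly f g)).[t] =
  (ratr f`_1 * ratr g`_0 - ratr f`_0 * ratr g`_1)
  + 2 * (ratr f`_2 * ratr g`_0 - ratr f`_0 * ratr g`_2) * t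
  + (ratr f`_2 * ratr g`_1 - ratr f`_1 * ratr g`_2) * t ^+ 2.
Proof.
rewrite hornerE3; last exact: size_Poly.
have r2 : ratr 2 = 2 :> algC by rewrite rmorph_nat.
by rewrite !coef_Poly /= !(rmorphB, rmorphM) /= r2.
Qed.

Lemma evalE f g (t : algC) : is_deg2 f g ->
  (map_poly ratr (Epoly f g)).[t] = hom2 f (t, 1) - t * hom2 g (t, 1).
Proof.
move=> hd; have [sf sg] := size3 _ _ hd.
by rewrite /Epoly rmorphB rmorphM /= map_polyX hornerD hornerN hornerM hornerX !evalF.
Qed.

Lemma evalR2 f g (t : algC) : is_deg2 f g ->
  (map_poly ratr (R2poly f g)).[t] =
  hom2 f (hom2 f (t, 1), hom2 g (t, 1)) - t * hom2 g (hom2 f (t, 1), hom2 g (t, 1)).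
Proof.
move=> hd; have [sf sg] := size3 _ _ hd.
rewrite /R2poly !(rmorphB, rmorphD, rmorphM, rmorphXn) /= !map_polyC map_polyX /=.
rewrite !(hornerD, hornerN, hornerM, hornerX, hornerC, horner_exp) !evalF // !hom2E.
ring.
Qed.

Lemma crit_aff f g (t : algC) : critical f g (t, 1) <-> (map_poly ratr (Wpoly f g)).[t] = 0.
Proof.
rewrite evalW; split.
  move=> [_ [c hc]].
  have e10 := hc 1 0; have e01 := hc 0 1; have e11 := hc 1 1.
  rewrite /happ /= !hom2E in e10 e01 e11.
  apply: (lincomb 1 e11); apply: (lincomb (-1) e01); apply: (lincomb (2 * t - 1) e10).
  ring.
move=> hW; split; first by rewrite /nzpt /= oner_neq0 orbT.
exists (hom2 g (t, 1) * ratr f`_2 - hom2 f (t, 1) * ratr g`_2).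
move=> x y; rewrite /happ /= !hom2E.
apply: (lincomb (x * y - t * y ^+ 2) hW); ring.
Qed.

Lemma per_aff f g (t : algC) : is_deg2 f g -> period2 f g (t, 1) <->
  (map_poly ratr (R2poly f g)).[t] = 0 /\ (map_poly ratr (Epoly f g)).[t] != 0.
Proof.
move=> hd; rewrite evalR2 // evalE //; split.
  case=> _; rewrite /peq /happ /= !mulr1 => /eqP h1 h2; split.
    by rewrite h1 subrr.
  by apply: contra h2; rewrite subr_eq0.
case=> h1 h2; split; first by rewrite /nzpt /= oner_neq0 orbT.
  by rewrite /peq /happ /= mulr1 -subr_eq0 h1.
by rewrite /peq /happ /= mulr1 -subr_eq0.
Qed.

Lemma prop_contra f g (j : nat) : is_deg2 f g -> f`_j != 0 ->
  (forall i, f`_j * g`_i = g`_j * f`_i) -> False.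
Proof.
move=> hd hfj h.
have eg : g = (g`_j / f`_j) *: f.
  apply/polyP => i; rewrite coefZ; apply: (mulfI hfj); rewrite h; field.
  exact: hfj.
case/andP: hd => hcop /eqP hmax.
have [gj|gj] := eqVneq g`_j 0.
  rewrite eg gj mul0r scale0r in hcop hmax.
  move: hcop; rewrite coprimep0 => /eqp_size; rewrite size_poly1 => sf.
  by move: hmax; rewrite sf size_poly0.
have hl : g`_j / f`_j != 0 by rewrite mulf_neq0 ?invr_neq0.
rewrite eg coprimepZr // in hcop; rewrite eg size_scale // maxnn in hmax.
move: hcop; rewrite /coprimep gcdpp hmax.
by [].
Qed.

Arguments prop_contra {f g j}.

Lemma Wnz f g : is_deg2 f g -> Wpoly f g != 0.
Proof.
move=> hd; apply/negP => /eqP W0.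
have [sf sg] := size3 _ _ hd.
have m1 : f`_1 * g`_0 = f`_0 * g`_1.
  by apply/eqP; rewrite -subr_eq0; have := congr1 (fun p : {poly rat} => p`_0) W0;
     rewrite /Wpoly coef_Poly coef0 /= => ->.
have m3 : f`_2 * g`_1 = f`_1 * g`_2.
  by apply/eqP; rewrite -subr_eq0; have := congr1 (fun p : {poly rat} => p`_2) W0;
     rewrite /Wpoly coef_Poly coef0 /= => ->.
have m2 : f`_2 * g`_0 = f`_0 * g`_2.
  have := congr1 (fun p : {poly rat} => p`_1) W0; rewrite /Wpoly coef_Poly coef0 /= => /eqP.
  by rewrite mulf_eq0 pnatr_eq0 /= subr_eq0 => /eqP.
have big : forall j i, (3 <= i)%N -> f`_j * g`_i = g`_j * f`_i.
  by move=> j i hi; rewrite (nth_default _ (leq_trans sg hi)) (nth_default _ (leq_trans sf hi)) !mulr0.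
have [f0|f0] := eqVneq f`_0 0; last first.
  apply: (prop_contra hd f0) => -[|[|[|i]]] //; try by move/big: (isT : (3 <= i.+3)%N).
  - by rewrite mulrC.
  - by rewrite -m1 mulrC.
  - by rewrite -m2 mulrC.
have [f1|f1] := eqVneq f`_1 0; last first.
  apply: (prop_contra hd f1) => -[|[|[|i]]] //; try by move/big: (isT : (3 <= i.+3)%N).
  - by rewrite m1 mulrC.
  - by rewrite mulrC.
  - by rewrite -m3 mulrC.
have [f2|f2] := eqVneq f`_2 0; last first.
  apply: (prop_contra hd f2) => -[|[|[|i]]] //; try by move/big: (isT : (3 <= i.+3)%N).
  - by rewrite m2 mulrC.
  - by rewrite m3 mulrC.
  - by rewrite mulrC.
have fz : f = 0.
  apply/polyP => i; rewrite coef0; case: i => [|[|[|i]]] //.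
  by apply: nth_default; apply: leq_trans sf _.
case/andP: hd => hcop /eqP hmax.
move: hcop; rewrite fz coprime0p => /eqp_size; rewrite size_poly1 => sg1.
by move: hmax; rewrite fz sg1 size_poly0.
Qed.

Lemma crit_sc f g k P : k != 0 -> critical f g P -> critical f g (sc k P).
Proof.
move=> hk [nzP [c hc]]; split.
  move: nzP; rewrite /nzpt /sc /= !mulf_eq0 !negb_or (negbTE hk) /=.
  by [].
exists c => x y; rewrite happ_sc.
case: P nzP hc => p q _ hc; have := hc x y; rewrite /sc /happ /= => h.
by apply: (lincomb (k ^+ 2) h); ring.
Qed.

Lemma per_sc f g k P : k != 0 -> period2 f g P -> period2 f g (sc k P).
Proof.
move=> hk [nzP per nfix]; split.
- by move: nzP; rewrite /nzpt /sc /= !mulf_eq0 !negb_or (negbTE hk) /=.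
- by rewrite !happ_sc peq_scl ?expf_neq0 // peq_scr.
- by rewrite happ_sc peq_scl ?expf_neq0 // peq_scr.
Qed.

Arguments crit_sc {f g k P}.
Arguments per_sc {f g k P}.
Arguments NF {f g p q r s}.
Arguments a1_nz {f g r p s q b2}.
Arguments two_crit {f g r p s q a1 b2 P}.
Arguments conj_root {w x}.
Arguments per_aff {f g} t.

Lemma rational_point f g P : is_deg2 f g -> trivial_aut f g ->
  critical f g P -> period2 f g P ->
  exists p0 q0 : rat, critical f g (ratr p0, ratr q0) /\ period2 f g (ratr p0, ratr q0).
Proof.
move=> hd htriv; case: P => x y crit per.
have nzP : nzpt (x, y) by case: crit.
have [y0|ny] := eqVneq y 0.
  have hx : x != 0 by move: nzP; rewrite /nzpt y0 eqxx orbF.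
  exists 1, 0; rewrite rmorph1 rmorph0.
  have -> : ((1 : algC), (0 : algC)) = sc x^-1 (x, y).
    by rewrite /sc y0 /= mulr0 mulVf.
  by split; [apply: crit_sc | apply: per_sc]; rewrite ?invr_neq0.
have e1 : sc y^-1 (x, y) = (x / y, 1) by rewrite /sc /= mulVf // mulrC.
have crit1 := crit_sc (invr_neq0 ny) crit; rewrite e1 in crit1.
have per1 := per_sc (invr_neq0 ny) per; rewrite e1 in per1.
move: crit1 per1; set t := x / y => crit1 per1.
have [/CratP [t0 et]|ht] := boolP (t \in Crat).
  by exists t0, 1; rewrite rmorph1 -et.
exfalso.
have [hD [a1 [b2 [hb2 [_ hNF]]]]] := NF hd crit1 per1 (erefl _).
have [a10|ha1] := eqVneq a1 0.
  by rewrite a10 in hNF; apply: (a1_nz hD hNF htriv).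
have hW := proj1 (crit_aff f g t) crit1.
have [hR hE] := proj1 (per_aff t hd) per1.
have [x' [hx' hne htr]] := conj_root (size_Poly _ : (size (Wpoly f g) <= 3)%N) (Wnz _ _ hd) ht hW.
have crit' : critical f g (x', 1).
  by apply/crit_aff; apply/eqP; rewrite -htr hW.
have per' : period2 f g (x', 1).
  apply/(per_aff x' hd); split; first by apply/eqP; rewrite -htr hR.
  by rewrite -htr.
apply: (two_crit hD ha1 hb2 hNF crit' per').
by rewrite /peq /= !mulr1.
Qed.

Lemma hom2_phiv v (X Y : algC) : hom2 (phiv_num v) (X, Y) = ratr v * (X * Y - Y ^+ 2).
Proof.
rewrite hom2E /phiv_num !(coefZ, coefB, coefX, coefC) /=.
rewrite !rmorphM !rmorphB /= rmorph0 rmorph1; ring.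
Qed.

Lemma hom2_den (X Y : algC) : hom2 phiv_den (X, Y) = X ^+ 2.
Proof. by rewrite hom2E /phiv_den !coefXn /= rmorph0 rmorph1; ring. Qed.

Lemma final f g r p s q a1 b2 :
  p \in Crat -> q \in Crat -> r \in Crat -> s \in Crat -> a1 \in Crat -> b2 \in Crat ->
  r * q - p * s != 0 -> a1 != 0 -> b2 != 0 ->
  (forall U, happ f g (mob r p s q U) =
     sc (r * q - p * s)^-1 (mob r p s q (psi (r * q - p * s) a1 b2 U))) ->
  exists v : rat, v != 0 /\
    exists a b c d : rat, a * d - b * c != 0 /\
      forall P : pt, nzpt P ->
        peq (happ f g (mob (ratr a) (ratr b) (ratr c) (ratr d) P))
            (mob (ratr a) (ratr b) (ratr c) (ratr d)
                 (happ (phiv_num v) phiv_den P)).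
Proof.
move=> hp hq hr hs ha hb hD ha1 hb2 hNF.
have hk : - (r * q - p * s) / a1 != 0 by rewrite mulf_neq0 ?oppr_eq0 ?invr_neq0.
have hkC : - (r * q - p * s) / a1 \in Crat by rewrite !(rpredM, rpredN, rpredB, rpredV).
have hvC : a1 ^+ 3 / (b2 * (r * q - p * s) ^+ 2) \in Crat.
  by rewrite !(rpredM, rpredN, rpredB, rpredV, rpredX).
have /CratP [v0 ev] := hvC.
exists v0; split.
  have h : (ratr v0 : algC) != 0 by rewrite -ev mulf_neq0 ?expf_neq0 // invr_neq0 // mulf_neq0 // expf_neq0.
  by apply: contraNneq h => ->; rewrite rmorph0.
have /CratP [a ea] : r * (- (r * q - p * s) / a1) \in Crat by rewrite rpredM.
have /CratP [b eb] := hp.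
have /CratP [c ec] : s * (- (r * q - p * s) / a1) \in Crat by rewrite rpredM.
have /CratP [d ed] := hq.
exists a, b, c, d; split.
  rewrite -(fmorph_eq0 (ratr : rat -> algC)) rmorphB !rmorphM /= -ea -eb -ec -ed.
  have -> : r * (- (r * q - p * s) / a1) * q - p * (s * (- (r * q - p * s) / a1)) =
    (- (r * q - p * s) / a1) * (r * q - p * s) by ring.
  by rewrite mulf_neq0.
case=> X Y _; rewrite -ea -eb -ec -ed.
have -> : mob (r * (- (r * q - p * s) / a1)) p (s * (- (r * q - p * s) / a1)) q (X, Y)
   = mob r p s q (- (r * q - p * s) / a1 * X, Y) by rewrite /mob /=; congr pair; ring.
rewrite hNF peq_scl ?invr_neq0 //.
have -> : mob (r * (- (r * q - p * s) / a1)) p (s * (- (r * q - p * s) / a1)) q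
   (happ (phiv_num v0) phiv_den (X, Y)) =
   mob r p s q (- (r * q - p * s) / a1 * hom2 (phiv_num v0) (X, Y),
                hom2 phiv_den (X, Y)) by rewrite /mob /happ /=; congr pair; ring.
rewrite peq_mob // /peq /psi /= hom2_phiv hom2_den -ev; apply/eqP.
field.
by rewrite ha1 hb2 hD.
Qed.

Arguments final {f g r p s q a1 b2}.

Theorem lemma2p5 (f g : {poly rat}) :
  is_deg2 f g ->
  (exists P : pt, critical f g P /\ period2 f g P) ->
  trivial_aut f g ->
  exists v : rat, v != 0 /\
    exists a b c d : rat, a * d - b * c != 0 /\
      forall P : pt, nzpt P ->
        peq (happ f g (mob (ratr a) (ratr b) (ratr c) (ratr d) P))
            (mob (ratr a) (ratr b) (ratr c) (ratr d)
                 (happ (phiv_num v) phiv_den P)).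
Proof.
move=> hd [P [crit per]] htriv.
have [p0 [q0 [crit0 per0]]] := rational_point _ _ _ hd htriv crit per.
have [hD [a1 [b2 [hb2 [hrat hNF]]]]] := NF hd crit0 per0 (erefl _).
have [a10|ha1] := eqVneq a1 0.
  by rewrite a10 in hNF; case: (a1_nz hD hNF htriv).
have hpC := Crat_rat p0; have hqC := Crat_rat q0.
have /andP [ha1C hb2C] := hrat hpC hqC (hom2_Crat f _ _ hpC hqC) (hom2_Crat g _ _ hpC hqC).
exact: (final hpC hqC (hom2_Crat f _ _ hpC hqC) (hom2_Crat g _ _ hpC hqC) ha1C hb2C hD ha1 hb2 hNF).
Qed.
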